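(* Let $K$ be a field and $P$ an arbitrary poset. Let $\alpha\in FI(P)$ be an idempotent ($\alpha^2=\alpha$), and let $\varepsilon\in FI(P)$ be the diagonal element with $\varepsilon(x,x)=\alpha(x,x)$ for all $x\in P$. Then $\varepsilon$ is an idempotent and there is an invertible $\beta\in FI(P)$ with $\alpha=\beta^{-1}\varepsilon\beta$.
   Context: $K$ is a field, $P$ an arbitrary poset. $I(P)$ is the set of functions $\alpha$ assigning to each pair $x\le y$ in $P$ a value $\alpha(x,y)\in K$. An element $\alpha\in I(P)$ is a finitary series if for all $x<y$ in $P$ there are only finitely many pairs $(u,v)$ with $x\le u<v\le y$ and $\alpha(u,v)\neq0$; $FI(P)$ is the set of finitary series. $FI(P)$ is an associative $K$-algebra under pointwise addition and convolution $(\alpha\beta)(x,y)=\sum_{x\le z\le y}\alpha(x,z)\beta(z,y)$, with identity $\delta$ given by $\delta(x,y)=1$ if $x=y$ and $0$ otherwise. An element $\alpha\in FI(P)$ is diagonal if $\alpha(x,y)=0$ whenever $x\neq y$. *)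

(* Defs.v *)
From HB Require Import structures.
From mathcomp Require Import all_boot all_order all_algebra.
From Stdlib Require Import ClassicalEpsilon.
Set Implicit Arguments. Unset Strict Implicit. Unset Printing Implicit Defensive.
Import Order.TTheory GRing.Theory.
Local Open Scope ring_scope.

Section FI.
Variables (K : fieldType) (d : Order.disp_t) (P : porderType d).

(* Elements of I(P) are represented as functions P -> P -> K; only the values
   at pairs x <= y are meaningful (see [incidence] and [ieq]). *)
Definition series := P -> P -> K.

Definition incidence (a : series) : Prop :=
  forall x y, ~~ (x <= y)%O -> a x y = 0.

Definition ieq (a b : series) : Prop :=
  forall x y, (x <= y)%O -> a x y = b x y.

Definition finitary (a : series) : Prop :=
  forall x y, (x < y)%O -> exists r : seq (P * P),
    forall u v, (x <= u)%O -> (u < v)%O -> (v <= y)%O -> a u v != 0 -> (u, v) \in r.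

Definition FI (a : series) : Prop := incidence a /\ finitary a.

Definition has_fsum (f : P -> K) (s : K) : Prop :=
  exists r : seq P, [/\ uniq r, (forall z, f z != 0 -> z \in r) & s = \sum_(z <- r) f z].

(* The sum of a finitely supported family (junk value if not finitely supported). *)
Definition fsum (f : P -> K) : K := epsilon (inhabits 0) (has_fsum f).

Definition conv (a b : series) : series := fun x y =>
  fsum (fun z => if (x <= z)%O && (z <= y)%O then a x z * b z y else 0).

Definition delta : series := fun x y => if x == y then 1 else 0.

Definition diagonal (a : series) : Prop := forall x y, x != y -> a x y = 0.

End FI.

(* Main.v *)
Require Import Defs.
From HB Require Import structures.
From mathcomp Require Import all_boot all_order all_algebra.
From Stdlib Require Import ClassicalEpsilon FunctionalExtensionality.
Set Implicit Arguments. Unset Strict Implicit. Unset Printing Implicit Defensive.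
Import Order.TTheory GRing.Theory.
Local Open Scope ring_scope.

Section Dev.
Variables (K : fieldType) (d : Order.disp_t) (P : porderType d).
Notation series := (series K P).

Definition fin_supp (f : P -> K) := exists r : seq P, uniq r /\ forall z, f z != 0 -> z \in r.

Lemma fsum_eq (f : P -> K) r : uniq r -> (forall z, f z != 0 -> z \in r) ->
  fsum f = \sum_(z <- r) f z.
Proof.
move=> ur sr.
have H : has_fsum f (\sum_(z <- r) f z) by exists r.
rewrite /fsum; case: (epsilon_spec (inhabits 0) (has_fsum f) (ex_intro _ _ H)).
move=> r' [ur' sr' ->].
rewrite [RHS](bigID (fun z => z \in r')) /= [X in _ = _ + X]big1; last first.
  by move=> z zr; apply/eqP; apply: contraNT zr => /sr'.
rewrite [LHS](bigID (fun z => z \in r)) /= [X in _ + X = _]big1 ?add0r ?addr0; last first.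
  by move=> z zr; apply/eqP; apply: contraNT zr => /sr.
rewrite -[LHS]big_filter -[RHS]big_filter; apply: perm_big; apply: uniq_perm; rewrite ?filter_uniq //.
by move=> z; rewrite !mem_filter andbC.
Qed.

Lemma fsum0 : fsum (fun _ : P => (0 : K)) = 0.
Proof. by rewrite (@fsum_eq _ [::]) ?big_nil // => z; rewrite eqxx. Qed.

Lemma fsum_nz (f : P -> K) : fsum f != 0 -> exists z, f z != 0.
Proof.
move=> H; apply: NNPP => hn; move: H; suff -> : f = (fun _ => 0) by rewrite fsum0 eqxx.
apply: functional_extensionality => z; apply/eqP; apply: contraT => nz; exfalso; apply: hn; by exists z.
Qed.

Lemma fsum_add (f g : P -> K) : fin_supp f -> fin_supp g ->
  fsum (fun z => f z + g z) = fsum f + fsum g.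
Proof.
move=> [rf [uf sf]] [rg [ug sg]].
have S h : (forall z, h z != 0 -> z \in rf \/ z \in rg) -> forall z, h z != 0 -> z \in undup (rf ++ rg).
  by move=> Hh z /Hh [] zi; rewrite mem_undup mem_cat zi ?orbT.
rewrite !(@fsum_eq _ (undup (rf ++ rg))) ?undup_uniq ?big_split //.
- by apply: S => z /sg; right.
- by apply: S => z /sf; left.
apply: S => z nz; case: (boolP (f z != 0)) => [/sf|]; first by left.
by rewrite negbK => /eqP fz; right; apply: sg; rewrite fz add0r in nz.
Qed.

Lemma fsum_scale (c : K) (f : P -> K) : fin_supp f ->
  fsum (fun z => c * f z) = c * fsum f.
Proof.
move=> [r [u s]]; rewrite !(@fsum_eq _ r) // ?big_distrr //.
by move=> z nz; apply: s; apply: contraNneq nz => ->; rewrite mulr0.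
Qed.


Definition covers (L : seq P) (x y : P) (a : series) :=
  forall p q, (x <= p)%O -> (p < q)%O -> (q <= y)%O -> a p q != 0 -> (p \in L) && (q \in L).

Lemma covers_sub L1 L2 x y a : {subset L1 <= L2} -> covers L1 x y a -> covers L2 x y a.
Proof.
move=> s c p q xp pq qy nz; case/andP: (c p q xp pq qy nz) => /s -> /s -> //.
Qed.

Lemma cover1 (a : series) (x y : P) : finitary a -> exists L, covers L x y a.
Proof.
move=> fa; case: (boolP (x < y)%O) => xy.
  case: (fa x y xy) => r hr; exists (map fst r ++ map snd r).
  move=> p q xp pq qy nz; have pr := hr p q xp pq qy nz.
  have := map_f fst pr; have := map_f snd pr; rewrite /= => h1 h2.
  by rewrite !mem_cat h1 h2 orbT.
exists [::] => p q xp pq qy; exfalso.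
by move: xy; rewrite (le_lt_trans xp (lt_le_trans pq qy)).
Qed.

Lemma cover_all (As : seq series) (x y : P) : (forall a, List.In a As -> finitary a) ->
  exists L, [/\ uniq L, x \in L, y \in L & forall a, List.In a As -> covers L x y a].
Proof.
elim: As => [|a As IH] H.
  exists (undup [:: x; y]); split; rewrite ?undup_uniq ?mem_undup ?inE ?eqxx ?orbT //.
have [L [uL xL yL cL]] : exists L, [/\ uniq L, x \in L, y \in L & forall a, List.In a As -> covers L x y a].
  by apply: IH => b hb; apply: H; right.
have [La cLa] := cover1 x y (H a (or_introl erefl)).
exists (undup (La ++ L)); split; rewrite ?undup_uniq ?mem_undup ?mem_cat ?xL ?yL ?orbT //.
move=> b [<-|hb]; apply: covers_sub (cLa) || apply: covers_sub (cL b hb);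
  by move=> z; rewrite mem_undup mem_cat => ->; rewrite ?orbT.
Qed.

Lemma conv_out (a b : series) (x y : P) : ~~ (x <= y)%O -> conv a b x y = 0.
Proof.
move=> nxy; rewrite /conv.
have -> : (fun z => if (x <= z)%O && (z <= y)%O then a x z * b z y else 0) = fun _ => 0.
  apply: functional_extensionality => z; case: ifP => // /andP [xz zy].
  by rewrite (le_trans xz zy) in nxy.
exact: fsum0.
Qed.

Lemma conv_supp (a b : series) L (x y u v : P) : covers L x y a -> u \in L -> v \in L ->
  (x <= u)%O -> (v <= y)%O ->
  forall z, (if (u <= z)%O && (z <= v)%O then a u z * b z v else 0) != 0 -> z \in L.
Proof.
move=> cA uL vL xu vy z; case: ifP => [/andP [uz zv]|]; last by rewrite eqxx.
move=> nz; case: (eqVneq z u) => [->//|zu].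
have uz' : (u < z)%O by rewrite lt_neqAle eq_sym zu uz.
have na : a u z != 0 by apply: contraNneq nz => ->; rewrite mul0r.
by case/andP: (cA u z xu uz' (le_trans zv vy) na).
Qed.

Lemma conv_list (a b : series) L (x y u v : P) : uniq L -> covers L x y a ->
  u \in L -> v \in L -> (x <= u)%O -> (v <= y)%O ->
  conv a b u v = \sum_(z <- L) (if (u <= z)%O && (z <= v)%O then a u z * b z v else 0).
Proof. by move=> uL cA uLL vL xu vy; apply: fsum_eq => //; exact: (conv_supp (b:=b) cA uLL vL xu vy). Qed.

Lemma conv_fin (a b : series) (x y : P) : FI a -> FI b ->
  fin_supp (fun z => if (x <= z)%O && (z <= y)%O then a x z * b z y else 0).
Proof.
move=> [_ fa] [_ fb].
have H2 : forall c, List.In c [:: a; b] -> finitary c by move=> c [<-|[<-|[]]].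
have [L [uL xL yL cL]] := cover_all x y H2.
exists L; split => //; exact: (conv_supp (b:=b) (cL a (or_introl erefl)) xL yL (lexx x) (lexx y)).
Qed.

Lemma covers_conv L (x y : P) (a b : series) : covers L x y a -> covers L x y b -> covers L x y (conv a b).
Proof.
move=> ca cb p q xp pq qy /fsum_nz [z]; case: ifP => [/andP [pz zq]|]; last by rewrite eqxx.
move=> nz.
have na : a p z != 0 by apply: contraNneq nz => ->; rewrite mul0r.
have nb : b z q != 0 by apply: contraNneq nz => ->; rewrite mulr0.
case: (eqVneq z p) => [ezp|nzp]; first by subst z; exact: cb p q xp pq qy nb.
have pz' : (p < z)%O by rewrite lt_neqAle eq_sym nzp pz.
have /andP [pL zL] := ca p z xp pz' (le_trans zq qy) na.
rewrite pL /=; case: (eqVneq z q) => [<-//|nzq].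
have zq' : (z < q)%O by rewrite lt_neqAle nzq zq.
by case/andP: (cb z q (le_trans xp pz) zq' qy nb).
Qed.

Lemma finitary_covers (a : series) : (forall x y, (x < y)%O -> exists L, covers L x y a) -> finitary a.
Proof.
move=> H x y xy; case: (H x y xy) => L cL; exists [seq (p, q) | p <- L, q <- L].
move=> u v xu uv vy nz; case/andP: (cL u v xu uv vy nz) => uL vL; exact: allpairs_f.
Qed.


Lemma In3 (a b c : series) (Q : series -> Prop) : Q a -> Q b -> Q c ->
  forall e, List.In e [:: a; b; c] -> Q e.
Proof. by move=> qa qb qc e [<-|[<-|[<-|[]]]]. Qed.

Lemma FI_conv (a b : series) : FI a -> FI b -> FI (conv a b).
Proof.
move=> [ia fa] [ib fb]; split; first by move=> x y; exact: conv_out.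
apply: finitary_covers => x y _.
have [L [uL xL yL cL]] := cover_all x y (In3 (Q := @finitary K d P) fa fb fb).
exists L; apply: covers_conv; apply: cL; simpl; tauto.
Qed.

Lemma conv_assoc (a b c : series) : FI a -> FI b -> FI c ->
  conv (conv a b) c = conv a (conv b c).
Proof.
move=> Fa Fb Fc.
apply: functional_extensionality => x; apply: functional_extensionality => y.
case: (boolP (x <= y)%O) => xy; last by rewrite !conv_out.
have [L [uL xL yL cL]] := cover_all x y (In3 (Q := @finitary K d P) Fa.2 Fb.2 Fc.2).
have ca : covers L x y a by apply: cL; simpl; tauto.
have cb : covers L x y b by apply: cL; simpl; tauto.
have cab := covers_conv ca cb.
rewrite (conv_list _ uL cab xL yL (lexx x) (lexx y)).
rewrite (conv_list _ uL ca xL yL (lexx x) (lexx y)).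
transitivity (\sum_(w <- L) \sum_(z <- L)
   (if [&& (x <= z)%O, (z <= w)%O & (w <= y)%O] then a x z * b z w * c w y else 0)).
  apply: eq_big_seq => w wL; case: ifP => [/andP [xw wy]|nc].
    rewrite (conv_list _ uL ca xL wL (lexx x) wy) big_distrl; apply: eq_bigr => z _.
    by rewrite wy andbT; case: ifP => // _; exact: mul0r.
  rewrite big1 // => z _; case: ifP => // /and3P [xz zw wy].
  by rewrite (le_trans xz zw) wy in nc.
rewrite exchange_big; apply: eq_big_seq => z zL; case: ifP => [/andP [xz zy]|nc].
  rewrite (conv_list _ uL cb zL yL xz (lexx y)) big_distrr; apply: eq_bigr => w _.
  by rewrite xz /=; case: ifP => _; rewrite ?mulrA ?mulr0.
rewrite big1 // => w _; case: ifP => // /and3P [xz zw wy].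
by rewrite xz (le_trans zw wy) in nc.
Qed.

Definition sadd (a b : series) : series := fun x y => a x y + b x y.
Definition rscale (f : P -> K) (a : series) : series := fun x y => f x * a x y.

Lemma conv_addl (a b c : series) : FI a -> FI b -> FI c ->
  conv (sadd a b) c = sadd (conv a c) (conv b c).
Proof.
move=> Fa Fb Fc; apply: functional_extensionality => x; apply: functional_extensionality => y.
rewrite /sadd /conv -fsum_add; [|exact: conv_fin|exact: conv_fin]; congr fsum; apply: functional_extensionality => z.
by case: ifP; rewrite ?addr0 // mulrDl.
Qed.

Lemma conv_addr (a b c : series) : FI a -> FI b -> FI c ->
  conv a (sadd b c) = sadd (conv a b) (conv a c).
Proof.
move=> Fa Fb Fc; apply: functional_extensionality => x; apply: functional_extensionality => y.
rewrite /sadd /conv -fsum_add; [|exact: conv_fin|exact: conv_fin]; congr fsum; apply: functional_extensionality => z.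
by case: ifP; rewrite ?addr0 // mulrDr.
Qed.

Lemma conv_scalel f (a b : series) : FI a -> FI b ->
  conv (rscale f a) b = rscale f (conv a b).
Proof.
move=> Fa Fb; apply: functional_extensionality => x; apply: functional_extensionality => y.
rewrite /rscale /conv -fsum_scale; [|exact: conv_fin]; congr fsum; apply: functional_extensionality => z.
by case: ifP; rewrite ?mulr0 // mulrA.
Qed.

Lemma FI_delta : FI (@delta K d P).
Proof.
split.
  move=> x y nxy; rewrite /delta; case: eqP => // exy; by rewrite exy lexx in nxy.
move=> x y xy; exists [::] => u v _ uv _; rewrite /delta (lt_eqF uv) eqxx //.
Qed.

Lemma FI_sadd (a b : series) : FI a -> FI b -> FI (sadd a b).
Proof.
move=> [ia fa] [ib fb]; split; first by move=> x y nxy; rewrite /sadd ia ?ib ?addr0.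
apply: finitary_covers => x y _.
have [L [uL xL yL cL]] := cover_all x y (In3 (Q := @finitary K d P) fa fb fb).
exists L => p q xp pq qy nz.
case: (eqVneq (a p q) 0) => [az|anz].
  have bnz : b p q != 0 by move: nz; rewrite /sadd az add0r.
  by apply: (cL b) => //; simpl; tauto.
by apply: (cL a) => //; simpl; tauto.
Qed.

Lemma FI_rscale f (a : series) : FI a -> FI (rscale f a).
Proof.
move=> [ia fa]; split; first by move=> x y nxy; rewrite /rscale ia ?mulr0.
move=> x y xy; case: (fa x y xy) => r hr; exists r => u v xu uv vy nz; apply: hr => //.
by move: nz; rewrite /rscale => nz; apply: contraNneq nz => ->; rewrite mulr0.
Qed.

Lemma conv_delta_l (a : series) : incidence a -> conv (@delta K d P) a = a.
Proof.
move=> ia; apply: functional_extensionality => x; apply: functional_extensionality => y.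
case: (boolP (x <= y)%O) => xy; last by rewrite conv_out // ia.
rewrite /conv (@fsum_eq _ [:: x]) //.
  by rewrite big_seq1 lexx xy /= /delta eqxx mul1r.
move=> z; case: ifP => _; last by rewrite eqxx.
rewrite /delta; case: (eqVneq x z) => [<-|_]; first by rewrite inE.
by rewrite mul0r eqxx.
Qed.

Lemma conv_delta_r (a : series) : incidence a -> conv a (@delta K d P) = a.
Proof.
move=> ia; apply: functional_extensionality => x; apply: functional_extensionality => y.
case: (boolP (x <= y)%O) => xy; last by rewrite conv_out // ia.
rewrite /conv (@fsum_eq _ [:: y]) //.
  by rewrite big_seq1 lexx xy /= /delta eqxx mulr1.
move=> z; case: ifP => _; last by rewrite eqxx.
rewrite /delta; case: (eqVneq z y) => [->|_]; first by rewrite inE.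
by rewrite mulr0 eqxx.
Qed.

Lemma conv_diag (a b : series) (x : P) : conv a b x x = a x x * b x x.
Proof.
rewrite /conv (@fsum_eq _ [:: x]) // ?big_seq1 ?lexx //.
move=> z; case: ifP; rewrite ?eqxx // => /andP [xz zx] _.
by rewrite inE eq_le zx xz.
Qed.


Lemma count_lt (T : eqType) (p1 p2 : pred T) (L : seq T) z :
  (forall w, p1 w -> p2 w) -> z \in L -> p2 z -> ~~ p1 z -> (count p1 L < count p2 L)%N.
Proof.
move=> s; elim: L => // w L IH; rewrite inE => /orP [/eqP <-|zL] p2z np1z /=.
  by rewrite (negbTE np1z) p2z add0n add1n ltnS; apply: sub_count.
rewrite -addnS; apply: leq_add; last exact: IH.
by case e: (p1 w) => //; rewrite (s w e).
Qed.

Lemma sum_trunc (F : nat -> K) N M : (forall k, (N <= k)%N -> F k = 0) -> (N <= M)%N ->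
  \sum_(k < M) F k = \sum_(k < N) F k.
Proof.
move=> H NM; rewrite -!(big_mkord xpredT) (@big_cat_nat _ _ _ N 0 M _ _ (leq0n N) NM) /=.
rewrite [X in _ + X]big_nat_cond [X in _ + X]big1 ?addr0 // => k /andP [/andP [Nk _] _]; exact: H.
Qed.

Lemma tele (t : nat -> K) M : \sum_(k < M) (t k - t k.+1) = t 0%N - t M.
Proof.
elim: M => [|M IH]; first by rewrite big_ord0 subrr.
by rewrite big_ord_recr /= IH addrA subrK.
Qed.

Lemma sum_nz (F : nat -> K) M : \sum_(k < M) F k != 0 -> exists k, F k != 0.
Proof.
move=> H; apply: NNPP => hn; move: H; rewrite big1 ?eqxx // => k _.
apply/eqP; apply: contraT => nz; exfalso; apply: hn; by exists (nat_of_ord k).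
Qed.

Lemma sum_if_swap (L : seq P) (c : P -> bool) (A : P -> K) (B : nat -> P -> K) M (s : nat -> K) :
  \sum_(z <- L) (if c z then A z * \sum_(k < M) s k * B k z else 0)
  = \sum_(k < M) s k * \sum_(z <- L) (if c z then A z * B k z else 0).
Proof.
transitivity (\sum_(z <- L) \sum_(k < M) (if c z then s k * (A z * B k z) else 0)).
  apply: eq_bigr => z _; case: (c z); last by rewrite big1.
  rewrite big_distrr; apply: eq_bigr => k _ /=; by rewrite mulrCA.
rewrite exchange_big; apply: eq_bigr => k _; rewrite big_distrr; apply: eq_bigr => z _ /=.
by case: (c z); rewrite ?mulr0.
Qed.

Lemma sum_if_swap' (L : seq P) (c : P -> bool) (A : P -> K) (B : nat -> P -> K) M (s : nat -> K) :
  \sum_(z <- L) (if c z then (\sum_(k < M) s k * B k z) * A z else 0)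
  = \sum_(k < M) s k * \sum_(z <- L) (if c z then B k z * A z else 0).
Proof.
transitivity (\sum_(z <- L) \sum_(k < M) (if c z then s k * (B k z * A z) else 0)).
  apply: eq_bigr => z _; case: (c z); last by rewrite big1.
  rewrite big_distrl; apply: eq_bigr => k _ /=; by rewrite mulrA.
rewrite exchange_big; apply: eq_bigr => k _; rewrite big_distrr; apply: eq_bigr => z _ /=.
by case: (c z); rewrite ?mulr0.
Qed.

Section Inv.
Variable n : series.
Hypothesis Fn : FI n.
Hypothesis n0 : forall x, n x x = 0.

Fixpoint npow (k : nat) : series :=
  if k is k'.+1 then conv n (npow k') else @delta K d P.

Lemma FI_npow k : FI (npow k).
Proof. elim: k => [|k IH] /=; [exact: FI_delta | exact: FI_conv]. Qed.

Lemma covers_delta L x y : covers L x y (@delta K d P).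
Proof. by move=> p q _ pq _; rewrite /delta (lt_eqF pq) eqxx. Qed.

Lemma covers_npow L x y k : covers L x y n -> covers L x y (npow k).
Proof.
move=> cn; elim: k => [|k IH] /=; [exact: covers_delta | exact: covers_conv].
Qed.

Lemma npow_bound L x y : covers L x y n -> forall k u v, (x <= u)%O -> (v <= y)%O ->
  npow k u v != 0 -> (k <= count (fun w => (u < w)%O && (w <= v)%O) L)%N.
Proof.
move=> cn k; elim: k => [//|k IH] u v xu vy /= /fsum_nz [z].
case: ifP => [/andP [uz zv]|]; last by rewrite eqxx.
move=> nz.
have na : n u z != 0 by apply: contraNneq nz => ->; rewrite mul0r.
have nb : npow k z v != 0 by apply: contraNneq nz => ->; rewrite mulr0.
have uz' : (u < z)%O.
  rewrite lt_neqAle uz andbT; apply: contraNneq na => <-; by rewrite n0.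
have /andP [_ zL] := cn u z xu uz' (le_trans zv vy) na.
have := IH z v (le_trans xu uz) vy nb => h; apply: (leq_ltn_trans h).
apply: (count_lt (z := z)) => //.
- by move=> w /andP [zw wv]; rewrite (lt_trans uz' zw) wv.
- by rewrite uz' zv.
- by rewrite ltxx.
Qed.

Lemma npow_zero L x y u v k : covers L x y n -> (x <= u)%O -> (v <= y)%O ->
  ((size L).+1 <= k)%N -> npow k u v = 0.
Proof.
move=> cn xu vy Lk; apply/eqP; apply: contraT => nz.
have := npow_bound cn xu vy nz => h.
have := leq_trans h (count_size _ _) => h2.
by move: (leq_trans Lk h2); rewrite ltnn.
Qed.

Lemma npow_ev x y : exists N, forall k, (N <= k)%N -> npow k x y = 0.
Proof.
have [L cL] := cover1 x y Fn.2.
by exists (size L).+1 => k; apply: (npow_zero cL (lexx x) (lexx y)).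
Qed.

Definition bnd (x y : P) : nat :=
  epsilon (inhabits 0%N) (fun N => forall k, (N <= k)%N -> npow k x y = 0).

Definition binv : series := fun x y => \sum_(k < bnd x y) (-1) ^+ k * npow k x y.

Lemma binvE M x y : (forall k, (M <= k)%N -> npow k x y = 0) ->
  binv x y = \sum_(k < M) (-1) ^+ k * npow k x y.
Proof.
move=> HM; rewrite /binv.
have HB := epsilon_spec (inhabits 0%N) (fun N => forall k, (N <= k)%N -> npow k x y = 0)
  (npow_ev x y).
set F := fun k => (-1) ^+ k * npow k x y.
rewrite -(@sum_trunc F (bnd x y) (maxn M (bnd x y))) ?leq_maxr //; last first.
  by move=> k h; rewrite /F HB ?mulr0.
rewrite (@sum_trunc F M) ?leq_maxl //.
by move=> k h; rewrite /F HM ?mulr0.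
Qed.

Lemma covers_binv L x y : covers L x y n -> covers L x y binv.
Proof.
move=> cn p q xp pq qy; rewrite /binv => /(@sum_nz (fun k => (-1) ^+ k * npow k p q)) [k nz].
have nz' : npow k p q != 0 by apply: contraNneq nz => ->; rewrite mulr0.
exact: (covers_npow (k:=k) cn xp pq qy nz').
Qed.

Lemma FI_binv : FI binv.
Proof.
split.
  move=> x y nxy; rewrite /binv big1 // => k _; by rewrite (FI_npow k).1 ?mulr0.
apply: finitary_covers => x y _.
have [L cL] := cover1 x y Fn.2.
by exists L; apply: covers_binv.
Qed.

Lemma npow_succ_r k : conv (npow k) n = npow k.+1.
Proof.
elim: k => [|k IH] /=; first by rewrite conv_delta_l ?conv_delta_r //; exact: Fn.1.
by rewrite conv_assoc ?IH //; apply: FI_npow.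
Qed.

Lemma delta_out (x y : P) : ~~ (x <= y)%O -> @delta K d P x y = 0.
Proof. by move=> nxy; rewrite /delta; case: eqP => // e; rewrite e lexx in nxy. Qed.

Lemma good_list (x y : P) : exists L, [/\ uniq L, x \in L, y \in L & covers L x y n].
Proof.
have [L0 cL0] := cover1 x y Fn.2.
exists (undup (x :: y :: L0)); split; rewrite ?undup_uniq ?mem_undup ?inE ?eqxx ?orbT //.
by apply: covers_sub cL0 => z zi; rewrite mem_undup !inE zi !orbT.
Qed.

Lemma fin_tele (x y : P) M : (forall k, (M <= k)%N -> npow k x y = 0) ->
  \sum_(k < M) (-1) ^+ k * npow k x y + \sum_(k < M) (-1) ^+ k * npow k.+1 x y
  = @delta K d P x y.
Proof.
move=> HM; rewrite -big_split /=.
set f := fun k => (-1) ^+ k * npow k x y.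
transitivity (\sum_(k < M) (f k - f k.+1)).
  by apply: eq_bigr => k _; rewrite /f exprS mulN1r mulNr opprK.
by rewrite tele /f (HM M (leqnn M)) expr0 mul1r mulr0 subr0.
Qed.

Lemma rinv : conv (sadd (@delta K d P) n) binv = @delta K d P.
Proof.
rewrite conv_addl; [|exact: FI_delta|exact: Fn|exact: FI_binv].
rewrite conv_delta_l; last exact: FI_binv.1.
apply: functional_extensionality => x; apply: functional_extensionality => y.
rewrite /sadd; case: (boolP (x <= y)%O) => xy.
  have [L [uL xL yL cn]] := good_list x y.
  set M := (size L).+1.
  rewrite (conv_list _ uL cn xL yL (lexx x) (lexx y)).
  rewrite (@binvE M x y); last by move=> k; apply: (npow_zero cn (lexx x) (lexx y)).
  rewrite -[RHS](@fin_tele x y M); last by move=> k; apply: (npow_zero cn (lexx x) (lexx y)).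
  congr (_ + _).
  transitivity (\sum_(z <- L) (if (x <= z)%O && (z <= y)%O then
       n x z * \sum_(k < M) (-1) ^+ k * npow k z y else 0)).
    apply: eq_bigr => z _; case: ifP => // /andP [xz zy].
    by rewrite (@binvE M z y) // => k; apply: (npow_zero cn xz (lexx y)).
  rewrite (sum_if_swap L (fun z => (x <= z)%O && (z <= y)%O) (fun z => n x z) (fun k z => npow k z y) M (fun k => (-1) ^+ k)); apply: eq_bigr => k _; congr (_ * _); symmetry.
  exact: (conv_list _ uL cn xL yL (lexx x) (lexx y)).
by rewrite conv_out // (FI_binv).1 // delta_out // addr0.
Qed.

Lemma linv : conv binv (sadd (@delta K d P) n) = @delta K d P.
Proof.
rewrite conv_addr; [|exact: FI_binv|exact: FI_delta|exact: Fn].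
rewrite conv_delta_r; last exact: FI_binv.1.
apply: functional_extensionality => x; apply: functional_extensionality => y.
rewrite /sadd; case: (boolP (x <= y)%O) => xy.
  have [L [uL xL yL cn]] := good_list x y.
  have cb := covers_binv cn.
  set M := (size L).+1.
  rewrite (conv_list _ uL cb xL yL (lexx x) (lexx y)).
  rewrite (@binvE M x y); last by move=> k; apply: (npow_zero cn (lexx x) (lexx y)).
  rewrite -[RHS](@fin_tele x y M); last by move=> k; apply: (npow_zero cn (lexx x) (lexx y)).
  congr (_ + _).
  transitivity (\sum_(z <- L) (if (x <= z)%O && (z <= y)%O then
       (\sum_(k < M) (-1) ^+ k * npow k x z) * n z y else 0)).
    apply: eq_bigr => z _; case: ifP => // /andP [xz zy].
    by rewrite (@binvE M x z) // => k; apply: (npow_zero cn (lexx x) zy).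
  rewrite (sum_if_swap' L (fun z => (x <= z)%O && (z <= y)%O) (fun z => n z y) (fun k z => npow k x z) M (fun k => (-1) ^+ k)); apply: eq_bigr => k _; congr (_ * _); symmetry.
  rewrite -npow_succ_r.
  exact: (conv_list _ uL (covers_npow (k:=k) cn) xL yL (lexx x) (lexx y)).
by rewrite conv_out // (FI_binv).1 // delta_out // addr0.
Qed.

End Inv.

End Dev.

Theorem theorem3 (K : fieldType) (d : Order.disp_t) (P : porderType d)
    (alpha eps : series K P) :
  FI alpha ->
  ieq (conv alpha alpha) alpha ->
  diagonal eps -> incidence eps ->
  (forall x : P, eps x x = alpha x x) ->
  ieq (conv eps eps) eps /\
  exists beta beta' : series K P,
    [/\ FI beta, FI beta',
        ieq (conv beta beta') (@delta K d P),
        ieq (conv beta' beta) (@delta K d P)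
      & ieq alpha (conv (conv beta' eps) beta)].
Proof.
move=> Fa Aid Deps Ieps Eeps0.
pose e := fun x => alpha x x.
have A2 : conv alpha alpha = alpha.
  apply: functional_extensionality => x; apply: functional_extensionality => y.
  by case: (boolP (x <= y)%O) => xy; [exact: Aid | rewrite conv_out // Fa.1].
have ee : forall x, e x * e x = e x by move=> x; rewrite /e -conv_diag A2.
have e01 : forall x, e x = 0 \/ e x = 1.
  move=> x; have : e x * (e x - 1) = 0 by rewrite mulrBr mulr1 ee subrr.
  move/eqP; rewrite mulf_eq0 subr_eq0 => /orP [/eqP|/eqP]; auto.
have Eeps : eps = rscale e (@delta K d P).
  apply: functional_extensionality => x; apply: functional_extensionality => y.
  rewrite /rscale /delta; case: eqVneq => [<-|nxy]; first by rewrite mulr1 Eeps0.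
  by rewrite mulr0 Deps.
have Fd := @FI_delta K d P.
have Feps : FI eps by rewrite Eeps; apply: FI_rscale.
have epsA : forall a, FI a -> conv eps a = rscale e a.
  by move=> a Fa'; rewrite Eeps conv_scalel ?conv_delta_l //; exact: Fa'.1.
split.
  by move=> x y _; rewrite epsA // Eeps /rscale mulrA ee.
pose s := fun x => e x + e x - 1.
pose m := sadd alpha (rscale (fun _ => -1) eps).
have Fm : FI m by apply: FI_sadd => //; apply: FI_rscale.
pose n := rscale s m.
have Fn : FI n by apply: FI_rscale.
have n0 : forall x, n x x = 0.
  by move=> x; rewrite /n /m /rscale /sadd Eeps0 mulN1r subrr mulr0.
pose u := sadd (@delta K d P) n.
have Fu : FI u := FI_sadd Fd Fn.
have Fb := FI_binv Fn.
exists u, (binv n); split => //.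
- by move=> x y _; rewrite rinv.
- by move=> x y _; rewrite linv.
have key : conv eps u = conv u alpha.
  rewrite epsA // /u conv_addl // conv_delta_l; last exact: Fa.1.
  rewrite /n conv_scalel // /m conv_addl //; last by apply: FI_rscale.
  rewrite A2 conv_scalel // epsA //.
  apply: functional_extensionality => x; apply: functional_extensionality => y.
  rewrite /rscale /sadd Eeps /rscale /s; case: (e01 x) => ->.
    by rewrite !(mul0r, mulr0, addr0, add0r, sub0r) mulN1r subrr.
  by rewrite addrK !mul1r !mulN1r subrr addr0 addrCA subrr addr0.
move=> x y _; rewrite conv_assoc // key -conv_assoc // linv // conv_delta_l //.
exact: Fa.1.
Qed.
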